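(* Let $q$ be a prime power, $n\ge 1$ with $\gcd(n,q)=1$, and $\lambda\in\mathbb{F}_q^{*}$ of multiplicative order $t$. Let $\mathcal{C}=\mathcal{I}_i$ be an irreducible $\lambda$-constacyclic code of length $n$ and dimension $k$ over $\mathbb{F}_q$ corresponding to the $q$-cyclotomic coset $C_{1+t\alpha_i}=\{1+t\alpha_i,(1+t\alpha_i)q,\dots,(1+t\alpha_i)q^{k-1}\}$ modulo $tn$ (so $k=d_i$). Then $$N_{\langle\rho\rangle}(\mathcal{C}^{*})=\frac{(q^k-1)\gcd(1+t\alpha_i,n)}{tn}.$$ Moreover, the number of distinct nonzero Hamming weights of codewords of $\mathcal{C}$ is at most $N_{\langle\rho\rangle}(\mathcal{C}^{*})$, with equality if and only if for any two nonzero codewords $c_1,c_2\in\mathcal{C}$ of the same Hamming weight there exists an integer $j$ with $\rho^{j}(c_1)=c_2$.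
   Context: Standing setup: $q$ is a prime power, $n$ a positive integer with $\gcd(n,q)=1$, $\lambda\in\mathbb{F}_q^{*}$ has multiplicative order $t$ (so $t\mid q-1$). $\mathcal{R}=\mathbb{F}_q[x]/\langle x^n-\lambda\rangle$; vectors $(c_0,\dots,c_{n-1})\in\mathbb{F}_q^n$ are identified with $c_0+c_1x+\dots+c_{n-1}x^{n-1}\in\mathcal{R}$, and a $\lambda$-constacyclic code of length $n$ is an ideal of $\mathcal{R}$. Let $\zeta$ be a primitive $tn$-th root of unity in an extension $\mathbb{F}_{q^m}$ with $\zeta^n=\lambda$, so $x^n-\lambda=\prod_{i=0}^{n-1}(x-\zeta^{1+ti})$. The set $\mathcal{S}=\{1+ti:0\le i\le n-1\}$ (residues mod $tn$) is partitioned into the distinct $q$-cyclotomic cosets modulo $tn$, $C_{1+t\alpha_j}=\{(1+t\alpha_j)q^{h}\bmod tn: h\ge 0\}$, $j=0,\dots,s$, with $0=\alpha_0<\alpha_1<\dots<\alpha_s\le n-1$ and $d_j=|C_{1+t\alpha_j}|$. Let $m_j(x)=\prod_{h\in C_{1+t\alpha_j}}(x-\zeta^{h})$ (irreducible over $\mathbb{F}_q$), and let $\mathcal{I}_j$ be the ideal of $\mathcal{R}$ generated by $(x^n-\lambda)/m_j(x)$; this is an irreducible (minimal) $\lambda$-constacyclic code of dimension $d_j$, said to correspond to the coset $C_{1+t\alpha_j}$, and $\mathcal{R}=\mathcal{I}_0\oplus\dots\oplus\mathcal{I}_s$. The cyclic shift $\rho:\mathcal{R}\to\mathcal{R}$ is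 $\rho(c(x))=xc(x)$, i.e. $(c_0,\dots,c_{n-1})\mapsto(\lambda c_{n-1},c_0,\dots,c_{n-2})$; $\langle\rho\rangle$ is the cyclic group it generates, of order $tn$, acting on every $\lambda$-constacyclic code. For $b\in\mathbb{F}_q^{*}$, $\sigma_b(c)=bc$, and $M=\{\sigma_b:b\in\mathbb{F}_q^{*}\}$; $\langle\rho,M\rangle$ is the group generated by $\rho$ and $M$. For a code $\mathcal{C}$, $\mathcal{C}^{*}=\mathcal{C}\setminus\{0\}$, and for a group $G$ acting on a finite set $X$, $N_G(X)$ denotes the number of $G$-orbits on $X$. *)

(* Defs.v *)
From HB Require Import structures.
From mathcomp Require Import all_boot all_order all_algebra all_field.
Set Implicit Arguments.
Unset Strict Implicit.
Unset Printing Implicit Defensive.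
Import GRing.Theory.
Local Open Scope ring_scope.

(* b lies in the q-cyclotomic coset of a modulo N, i.e. b = a q^e (mod N)
   for some e >= 0.  Since gcd(q,N)=1 in our setting, the multiplicative
   order of q modulo N is < N (for N >= 2; trivial for N = 1), so ranging
   e over 0..N-1 covers all exponents. *)
Definition in_qcoset (q N a b : nat) : bool :=
  [exists e : 'I_N, (b %% N == (a * q ^ e) %% N)%N].

Definition qcoset (q N a : nat) : {set 'I_N} :=
  [set r : 'I_N | in_qcoset q N a r].

Section Code.
Variables (F : finFieldType) (n : nat) (lam : F).

Definition xnl : {poly F} := 'X^n - lam%:P.

Definition rho (c : 'rV[F]_n) : 'rV[F]_n := poly_rV (('X * rVpoly c) %% xnl).

(* ideal of R = F[x]/<x^n - lambda> generated by (x^n - lambda)/m(x);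
   elements of R are represented by vectors (polynomials of degree < n). *)
Definition irr_code (m : {poly F}) : {set 'rV[F]_n} :=
  [set c | [exists f : 'rV[F]_n,
     rVpoly c == (rVpoly f * (xnl %/ m)) %% xnl]].

Definition wH (c : 'rV[F]_n) : nat := #|[set i | c 0 i != 0]|.

Definition nonzero (C : {set 'rV[F]_n}) : {set 'rV[F]_n} := C :\ 0.

Definition rho_orbit (c : 'rV[F]_n) : {set 'rV[F]_n} :=
  [set d | fconnect rho c d].

Definition N_rho (X : {set 'rV[F]_n}) : nat := #|[set rho_orbit c | c in X]|.

Definition num_weights (C : {set 'rV[F]_n}) : nat :=
  size (undup [seq wH c | c <- enum (nonzero C)]).
End Code.

(* Main.v *)
Require Import Defs.
From HB Require Import structures.
From mathcomp Require Import all_boot all_order all_algebra all_field zify.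
Import GRing.Theory.
Local Open Scope ring_scope.

Lemma dvd_gcd_red (a N j : nat) : (0 < a)%N -> (N %| a * j)%N = (N %/ gcdn a N %| j)%N.
Proof.
move=> a0; set g := gcdn a N.
have g0 : (0 < g)%N by rewrite gcdn_gt0 a0.
have Ha : a = (a %/ g * g)%N by rewrite divnK // dvdn_gcdl.
have HN : N = (N %/ g * g)%N by rewrite divnK // dvdn_gcdr.
have cop : coprime (N %/ g) (a %/ g).
  rewrite /coprime; apply/eqP.
  have : (gcdn (a %/ g) (N %/ g) * g = g * 1)%N by rewrite muln_gcdl -Ha -HN muln1.
  by rewrite mulnC => /eqP; rewrite eqn_pmul2l // gcdnC => /eqP.
rewrite {1}HN {1}Ha -mulnA [(g * j)%N]mulnC mulnA dvdn_pmul2r //.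
by rewrite Gauss_dvdr.
Qed.

Lemma expf_cardX (F : finFieldType) (x : F) e : x ^+ (#|F| ^ e) = x.
Proof. by elim: e => [|e IH]; rewrite ?expr1 // expnS mulnC exprM IH expf_card. Qed.

Lemma uniq_map_inj (T1 T2 : eqType) (h : T1 -> T2) (s : seq T1) x y :
  uniq (map h s) -> x \in s -> y \in s -> h x = h y -> x = y.
Proof.
elim: s => //= z s IH /andP [nz us]; rewrite !inE.
move=> /orP [/eqP->|xs] /orP [/eqP->|ys] // E.
- by rewrite E (map_f h ys) in nz.
- by rewrite -E (map_f h xs) in nz.
- exact: IH.
Qed.

Section Main.
Variables (F L : finFieldType) (iota : {rmorphism F -> L})
  (n t alpha : nat) (lam : F) (zeta : L) (m : {poly F}).
Hypotheses (n0 : (0 < n)%N) (tprim : t.-primitive_root lam)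
  (zprim : (t * n)%N.-primitive_root zeta) (zn : zeta ^+ n = iota lam)
  (mdef : map_poly iota m =
    \prod_(r in qcoset #|F| (t * n) (1 + t * alpha)) ('X - (zeta ^+ r)%:P)).

Local Notation q := #|F|.
Local Notation N := (t * n)%N.
Local Notation a := (1 + t * alpha)%N.
Local Notation A := (qcoset #|F| (t * n) (1 + t * alpha)).
Local Notation k := #|A|.
Local Notation xl := (xnl n lam).
Local Notation g := (xl %/ m).
Local Notation C := (irr_code n lam m).
Local Notation rs := [seq zeta ^+ (val r) | r <- enum A].

Lemma t0 : (0 < t)%N. Proof. exact: prim_order_gt0 tprim. Qed.
Lemma N0 : (0 < N)%N. Proof. by rewrite muln_gt0 t0 n0. Qed.
Lemma q0 : (0 < q)%N. Proof. by apply/card_gt0P; exists 0. Qed.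

Lemma Mrs : map_poly iota m = \prod_(z <- rs) ('X - z%:P).
Proof. by rewrite mdef big_map big_enum. Qed.

Lemma cosetP (r : 'I_N) : r \in A -> exists e, zeta ^+ r = (zeta ^+ a) ^+ (q ^ e).
Proof.
rewrite inE => /existsP [e /eqP He]; exists e.
by rewrite -exprM -(prim_expr_mod zprim (a * _)) -He (prim_expr_mod zprim).
Qed.

Lemma za_in : zeta ^+ a \in rs.
Proof.
apply/mapP; exists (Ordinal (ltn_pmod a N0)); last by rewrite /= (prim_expr_mod zprim).
rewrite mem_enum inE; apply/existsP; exists (Ordinal N0).
by rewrite /= expn0 muln1 modn_mod.
Qed.

Lemma rs_uniq : uniq rs.
Proof.
rewrite map_inj_in_uniq ?enum_uniq // => r1 r2 _ _ /eqP.
by rewrite (eq_prim_root_expr zprim) !modn_small ?ltn_ord // => /eqP/val_inj.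
Qed.

Lemma lamt : lam ^+ t = 1. Proof. exact: prim_expr_order tprim. Qed.

Lemma rs_root z : z \in rs -> z ^+ n = iota lam.
Proof.
move=> /mapP [r]; rewrite mem_enum => /cosetP [e He] ->.
rewrite He -!exprM mulnA mulnC exprM zn -rmorphXn; congr (iota _).
by rewrite exprM exprD expr1 exprM lamt expr1n mulr1 expf_cardX.
Qed.

Lemma xl0 : xl != 0.
Proof. by rewrite -size_poly_gt0 /xnl size_XnsubC. Qed.
Lemma size_xl : size xl = n.+1.
Proof. by rewrite /xnl size_XnsubC. Qed.

Lemma m_dvd : m %| xl.
Proof.
rewrite -(dvdp_map iota) Mrs; apply: uniq_roots_dvdp; last by rewrite uniq_rootsE rs_uniq.
apply/allP => z /rs_root Hz.
by rewrite /root /xnl rmorphB /= map_polyXn map_polyC !hornerE Hz subrr.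
Qed.

Lemma size_m : size m = k.+1.
Proof. by rewrite -(size_map_poly iota) Mrs size_prod_XsubC size_map -cardE. Qed.

Lemma m0 : m != 0. Proof. by rewrite -size_poly_gt0 size_m. Qed.

Lemma xl_eq : xl = g * m. Proof. by rewrite divpK // m_dvd. Qed.

Lemma g0 : g != 0.
Proof. by apply: contra xl0 => /eqP H; rewrite xl_eq H mul0r. Qed.

Lemma size_g : (size g + k = n.+1)%N.
Proof.
have H := size_xl; rewrite {1}xl_eq size_mul ?g0 ?m0 // size_m addnS /= in H.
by rewrite H.
Qed.


Lemma g_dvd : g %| xl.
Proof. by have := dvdp_mulr m (dvdpp g); rewrite -xl_eq. Qed.

Lemma size_rV (c : 'rV[F]_n) : (size (rVpoly c) <= n)%N.
Proof. exact: size_poly. Qed.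

Lemma memC (c : 'rV[F]_n) : (c \in C) = (g %| rVpoly c).
Proof.
rewrite inE; apply/existsP/idP.
  by move=> [f /eqP ->]; rewrite -(dvdp_mod _ g_dvd) dvdp_mull // dvdpp.
move=> H; exists (poly_rV (rVpoly c %/ g)).
rewrite poly_rV_K ?divpK // ?modp_small // ?size_xl ?ltnS ?size_rV //.
by rewrite size_divp ?g0 // (leq_trans (leq_subr _ _)) ?size_rV.
Qed.

Definition phi (v : 'rV[F]_k) : 'rV[F]_n := poly_rV (rVpoly v * g).

Lemma size_phi (v : 'rV[F]_k) : (size (rVpoly v * g)%R <= n)%N.
Proof.
apply: leq_trans (size_polyMleq _ _) _.
have := size_g.
have : (size (rVpoly v) <= k)%N by exact: size_poly.
have : (0 < k)%N.
  by apply/card_gt0P; exists (Ordinal (ltn_pmod a N0)); rewrite inE; apply/existsP; exists (Ordinal N0); rewrite /= expn0 muln1 modn_mod.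
move: (size (rVpoly v)) (size g) => x y; lia.
Qed.

Lemma phi_inj : injective phi.
Proof.
move=> v w /(congr1 rVpoly); rewrite /phi !poly_rV_K ?size_phi //.
by move/(mulIf g0)/(can_inj rVpolyK).
Qed.

Lemma C_img : C = phi @: setT.
Proof.
apply/setP => c; apply/idP/imsetP.
  rewrite memC => H; exists (poly_rV (rVpoly c %/ g)) => //.
  rewrite /phi poly_rV_K ?divpK ?rVpolyK //.
  rewrite size_divp ?g0 //; have := size_g; have := size_rV c; move: (size (rVpoly c)) (size g) => x y; lia.
by move=> [v _ ->]; rewrite memC /phi poly_rV_K ?size_phi // dvdp_mull // dvdpp.
Qed.

Lemma card_C : #|C| = (q ^ k)%N.
Proof.
rewrite C_img card_imset; last exact: phi_inj.
transitivity #|{: 'rV[F]_k}|; last by rewrite card_mx mul1n.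
by apply: eq_card => x; rewrite !inE.
Qed.


Lemma rVpoly_rho (c : 'rV[F]_n) : rVpoly (rho lam c) = ('X * rVpoly c) %% xl.
Proof. by rewrite /rho poly_rV_K // -ltnS -size_xl ltn_modp xl0. Qed.

Lemma rVpoly_iter j (c : 'rV[F]_n) : rVpoly (iter j (rho lam) c) = ('X^j * rVpoly c) %% xl.
Proof.
elim: j => [|j IH]; first by rewrite expr0 mul1r modp_small // size_xl ltnS size_rV.
by rewrite iterS rVpoly_rho IH modp_mul mulrA -exprS.
Qed.

Lemma iter_C j (c : 'rV[F]_n) : c \in C -> iter j (rho lam) c \in C.
Proof. by rewrite !memC rVpoly_iter -(dvdp_mod _ g_dvd); apply: dvdp_mull. Qed.

Lemma iter0 j : iter j (rho lam) 0 = 0 :> 'rV[F]_n.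
Proof.
apply: (can_inj rVpolyK); by rewrite rVpoly_iter linear0 mulr0 mod0p.
Qed.

Lemma pchar_nat : [pchar L].-nat q.
Proof.
have [p pp pc] := finPcharP F.
rewrite (eq_pnat _ (fmorph_pchar iota)) (eq_pnat _ (pcharf_eq pc)).
have Hq : q = (p ^ logn p q)%N := card_pprimeChar pc.
by rewrite Hq pnatX pnat_id.
Qed.

Lemma frob (h : {poly F}) (y : L) e :
  (map_poly iota h).[y ^+ (q ^ e)%N] = (map_poly iota h).[y] ^+ (q ^ e)%N.
Proof.
have Hn : [pchar L].-nat (q ^ e)%N by rewrite pnatX pchar_nat.
have qe0 : (q ^ e != 0)%N by rewrite -lt0n expn_gt0 q0.
elim/poly_ind: h => [|h c IH]; first by rewrite raddf0 !horner0 expr0n (negbTE qe0).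
rewrite raddfD /= rmorphM /= map_polyX map_polyC !hornerE IH exprDn_pchar //.
by rewrite exprMn -rmorphXn expf_cardX.
Qed.

Lemma stab (c : 'rV[F]_n) j : c \in C -> c != 0 -> (iter j (rho lam) c == c) = (N %| a * j)%N.
Proof.
move=> cC c0.
have XE : xl = g * m := xl_eq.
set G := xl %/ m in XE *.
have G0 : G != 0 := g0.
have gp : G %| rVpoly c by rewrite -memC.
set p := rVpoly c in gp *.
have p0 : p != 0 by apply: contra c0 => /eqP H; rewrite -(rVpolyK c) -/p H linear0.
set h := p %/ G.
have ph : p = h * G by rewrite divpK.
have h0 : h != 0 by apply: contra p0 => /eqP H; rewrite ph H mul0r.
have sh : (size h <= k)%N.
  rewrite size_divp //; have := size_g; have := size_rV c; rewrite -/G -/p.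
  by move: (size p) (size G) => x y; lia.
rewrite -(inj_eq (can_inj rVpolyK)) rVpoly_iter -/p.
have -> : (('X^j * p) %% xl == p) = (xl %| ('X^j - 1) * p).
  rewrite /dvdp mulrBl mul1r modpD modpN (modp_small (p:=p)) ?size_xl ?ltnS ?size_rV //.
  by rewrite subr_eq0.
rewrite ph mulrA XE [G * m]mulrC dvdp_mul2r // -(dvdp_map iota) Mrs.
rewrite rmorphM /= rmorphB /= map_polyXn rmorph1.
set Mh := map_poly iota h.
apply/idP/idP.
  move=> H.
  have : (('X^j - 1) * Mh).[zeta ^+ a] = 0.
    rewrite -(divpK H) hornerM; have := za_in; rewrite -root_prod_XsubC => /rootP ->.
    by rewrite mulr0.
  rewrite hornerM !hornerE => /eqP; rewrite mulf_eq0 subr_eq0 => /orP [hz|/eqP hz].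
    by rewrite (prim_order_dvd zprim) exprM.
  exfalso.
  have : \prod_(z <- rs) ('X - z%:P) %| Mh.
    apply: uniq_roots_dvdp; last by rewrite uniq_rootsE rs_uniq.
    apply/allP => z /mapP [r]; rewrite mem_enum => /cosetP [e He] ->.
    by rewrite He /root frob hz expr0n expn_eq0 eqn0Ngt q0.
  rewrite -Mrs dvdp_map => /(dvdp_leq h0); rewrite size_m.
  by move=> /leq_trans/(_ sh); rewrite ltnn.
rewrite (prim_order_dvd zprim) => /eqP Hd; apply: dvdp_mulr.
apply: uniq_roots_dvdp; last by rewrite uniq_rootsE rs_uniq.
apply/allP => z /mapP [r]; rewrite mem_enum => /cosetP [e He] ->.
rewrite He /root !hornerE -!exprM -mulnA [(q ^ e * j)%N]mulnC mulnA exprM Hd.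
by rewrite expr1n subrr.
Qed.



Lemma lam0 : lam != 0.
Proof.
apply/eqP => l0; have := lamt; rewrite l0 expr0n; case: eqP => [t00|_].
  by move: t0; rewrite t00.
by move/eqP; rewrite eq_sym oner_eq0.
Qed.

Lemma rho_modE (c : 'rV[F]_n) :
  ('X * rVpoly c) %% xl = 'X * rVpoly c - ((rVpoly c)`_n.-1)%:P * xl.
Proof.
set p := rVpoly c; set pc := p`_n.-1.
have sp : (size p <= n)%N := size_rV c.
have E : ('X * p) %% xl = ('X * p - pc%:P * xl) %% xl.
  by rewrite modpD modpN modp_mull subr0.
rewrite E modp_small // size_xl ltnS; apply/leq_sizeP => j jn.
rewrite coefB coefXM coefCM /xnl coefB coefXn coefC.
have -> : (j == 0%N) = false by apply/negbTE; rewrite -lt0n (leq_trans n0 jn).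
case: (ltngtP n j) jn => // [nj|<-] _.
  rewrite subr0 (_ : false%:R = 0) // mulr0 subr0.
  by move/leq_sizeP: sp => ->; rewrite // -ltnS prednK // (leq_ltn_trans _ nj).
by rewrite subr0 (_ : true%:R = 1) // mulr1 subrr.
Qed.

Lemma rho_coef (c : 'rV[F]_n) (i : 'I_n) :
  rho lam c 0 (ordS i) = if (i.+1 < n)%N then c 0 i else c 0 i * lam.
Proof.
rewrite /rho mxE rho_modE coefB coefXM coefCM /xnl coefB coefXn coefC /=.
case: ltnP => H.
  rewrite modn_small // /= (ltn_eqF H) subr0 mulr0 subr0.
  by rewrite -(coef_rVpoly_ord c i).
have iE : i.+1 = n by apply/eqP; rewrite eqn_leq H ltn_ord.
rewrite iE modnn /= eq_sym (negbTE (lt0n_neq0 n0)) sub0r (_ : false%:R = 0) // sub0r.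
rewrite mulrN opprK.
have -> : n.-1 = i by rewrite -(congr1 predn iE).
by rewrite coef_rVpoly_ord.
Qed.

Lemma wH_rho (c : 'rV[F]_n) : wH (rho lam c) = wH c.
Proof.
rewrite /wH -(card_preimset _ (can_inj (@ordSK n))).
apply: eq_card => i; rewrite !inE rho_coef; case: ifP => // _.
by rewrite mulf_eq0 (negbTE lam0) orbF.
Qed.

Lemma wH_iter (c : 'rV[F]_n) j : wH (iter j (rho lam) c) = wH c.
Proof. by elim: j => [|j IH] //; rewrite iterS wH_rho. Qed.

Local Notation X := (nonzero C).
Local Notation d := (N %/ gcdn a N)%N.
Local Notation rh := (rho lam).

Lemma d0 : (0 < d)%N.
Proof. by rewrite divn_gt0 ?gcdn_gt0 ?N0 ?orbT // dvdn_leq ?N0 ?dvdn_gcdr. Qed.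

Lemma memX (c : 'rV[F]_n) : (c \in X) = (c != 0) && (c \in C).
Proof. by rewrite /nonzero in_setD1. Qed.

Lemma stabd (c : 'rV[F]_n) j : c \in X -> (iter j rh c == c) = (d %| j)%N.
Proof. by rewrite memX => /andP [c0 cC]; rewrite stab // dvd_gcd_red. Qed.

Lemma iterX j (c : 'rV[F]_n) : c \in X -> iter j rh c \in X.
Proof.
move=> cX; have := cX; rewrite !memX => /andP [c0 cC]; rewrite iter_C // andbT.
apply: contra c0 => /eqP H.
have : iter (d * j - j) rh (iter j rh c) = c.
  rewrite -iterD subnK; first by apply/eqP; rewrite stabd // dvdn_mulr.
  by rewrite leq_pmull ?d0.
by rewrite H iter0 => <-.
Qed.

Lemma iter_mod (c : 'rV[F]_n) i : c \in X -> iter i rh c = iter (i %% d) rh c.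
Proof.
move=> cX; rewrite {1}(divn_eq i d) iterD; apply/eqP.
by rewrite stabd ?iterX // dvdn_mull.
Qed.

Lemma orbit_sym (c y : 'rV[F]_n) : c \in X -> fconnect rh c y -> fconnect rh y c.
Proof.
move=> cX /iter_findex; set i := findex _ _ _ => <-.
have E : c = iter (d - i %% d) rh (iter i rh c).
  rewrite -iterD; apply/esym/eqP; rewrite stabd //.
  rewrite {2}(divn_eq i d) addnCA subnK ?(ltnW (ltn_pmod i d0)) //.
  by rewrite dvdn_add ?dvdnn ?dvdn_mull.
rewrite {2}E; exact: fconnect_iter.
Qed.

Lemma orbit_sub (c y : 'rV[F]_n) : c \in X -> fconnect rh c y -> y \in X.
Proof. by move=> cX /iter_findex <-; apply: iterX. Qed.

Lemma card_orbit (c : 'rV[F]_n) : c \in X -> #|rho_orbit lam c| = d.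
Proof.
move=> cX.
have -> : rho_orbit lam c = [set iter (val j) rh c | j : 'I_d].
  apply/setP => y; rewrite inE; apply/idP/imsetP.
    move=> /iter_findex <-; rewrite (iter_mod _ _ cX).
    by exists (Ordinal (ltn_pmod (findex rh c y) d0)).
  by move=> [j _ ->]; apply: fconnect_iter.
rewrite card_imset ?card_ord //.
have key : forall i j : 'I_d, (i <= j)%N -> iter i rh c = iter j rh c -> i = j.
  move=> i j le H; apply: val_inj => /=.
  have : iter (j - i) rh (iter i rh c) = iter i rh c by rewrite -iterD subnK.
  move/eqP; rewrite stabd ?iterX // => /dvdn_leq.
  have := ltn_ord j; have := ltn_ord i; lia.
move=> i j H; case: (leqP i j) => [le|/ltnW le]; first exact: key.
by apply/esym/key.
Qed.

Lemma partX : partition [set rho_orbit lam c | c in X] X.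
Proof.
have -> : [set rho_orbit lam c | c in X] = equivalence_partition (fconnect rh) X.
  rewrite /equivalence_partition; apply: eq_in_imset => c cX; apply/setP => y.
  rewrite [in LHS]inE [in RHS]inE; apply/idP/idP; first by move=> H; rewrite H (orbit_sub _ _ cX H).
  by case/andP.
apply: equivalence_partitionP => x y z xX yX zX; split; first exact: connect0.
move=> Hxy; apply/idP/idP; last exact: connect_trans.
by apply: connect_trans; apply: orbit_sym.
Qed.

Lemma card_X : #|X| = (q ^ k - 1)%N.
Proof.
have := cardsD1 0 C; rewrite card_C.
have -> : (0 : 'rV[F]_n) \in C by rewrite memC linear0 dvdp0.
by move=> ->; rewrite /nonzero addKn.
Qed.

Lemma count_main : (N_rho lam X * N = (q ^ k - 1) * gcdn a n)%N.
Proof.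
have H := card_uniform_partition (n:=d) _ partX.
rewrite card_X in H; rewrite /N_rho.
rewrite H; last by move=> B /imsetP [c cX ->]; apply: card_orbit.
have -> : gcdn a n = gcdn a N.
  rewrite [N]mulnC Gauss_gcdl //.
  by rewrite /coprime gcdnC addnC mulnC gcdnMDl gcdn1.
by rewrite -mulnA divnK ?dvdn_gcdr.
Qed.


Lemma orbit_eq (c1 c2 : 'rV[F]_n) j : c1 \in X -> iter j rh c1 = c2 ->
  rho_orbit lam c1 = rho_orbit lam c2.
Proof.
move=> c1X E; have H12 : fconnect rh c1 c2 by rewrite -E fconnect_iter.
have H21 := orbit_sym _ _ c1X H12.
apply/setP => y; rewrite !inE; apply/idP/idP; exact: connect_trans.
Qed.

Definition hB (B : {set 'rV[F]_n}) := wH (odflt 0 [pick x in B]).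

Lemma hf (c : 'rV[F]_n) : hB (rho_orbit lam c) = wH c.
Proof.
rewrite /hB; case: pickP => [x /=|H].
  by rewrite inE => /iter_findex <-; rewrite wH_iter.
by have := H c; rewrite inE connect0.
Qed.

Lemma weights_main :
  (num_weights C <= N_rho lam X)%N /\ (num_weights C = N_rho lam X <->
      (forall c1 c2, c1 \in X -> c2 \in X ->
         wH c1 = wH c2 -> exists j : nat, iter j rh c1 = c2)).
Proof.
pose f := @rho_orbit F n lam.
pose s := map f (enum X).
pose u := undup s.
have E0 : [seq wH c | c <- enum X] = map hB s.
  by rewrite /s -map_comp; apply: eq_map => c /=; rewrite hf.
have Hmem : undup (map hB s) =i map hB u.
  move=> x; rewrite mem_undup; apply: eq_mem_map => y; by rewrite mem_undup.
have Hsu : size u = N_rho lam X.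
  rewrite /N_rho; have := card_uniqP (undup_uniq s) => <-.
  apply: eq_card => B; rewrite mem_undup; apply/mapP/imsetP.
    by move=> [c]; rewrite mem_enum => cX ->; exists c.
  by move=> [c cX ->]; exists c; rewrite ?mem_enum.
have Hw : num_weights C = size (undup (map hB s)) by rewrite /num_weights E0.
have Hle : (size (undup (map hB s)) <= size (map hB u))%N.
  by apply: uniq_leq_size (undup_uniq _) _ => x; rewrite Hmem.
split; first by rewrite Hw -Hsu -(size_map hB).
have Hiff : (num_weights C = N_rho lam X) <-> uniq (map hB u).
  rewrite Hw -Hsu -(size_map hB) (uniq_size_uniq (undup_uniq _) Hmem).
  by split => [->|/eqP ->].
rewrite Hiff; split.
  move=> U c1 c2 c1X c2X Ew.
  have : f c1 = f c2.
    apply: (@uniq_map_inj _ _ hB u (f c1) (f c2) U); rewrite ?mem_undup ?map_f ?mem_enum //.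
    by rewrite !hf.
  move=> Ef; have : c2 \in f c1 by rewrite Ef inE connect0.
  by rewrite inE => /iter_findex H; eexists; exact: H.
move=> Hc; rewrite map_inj_in_uniq ?undup_uniq // => B1 B2.
rewrite !mem_undup => /mapP [c1]; rewrite mem_enum => c1X -> /mapP [c2].
rewrite mem_enum => c2X -> Eh.
have [j Hj] := Hc c1 c2 c1X c2X (etrans (esym (hf c1)) (etrans Eh (hf c2))).
exact: orbit_eq Hj.
Qed.

End Main.

Theorem lemma2 (F L : finFieldType) (iota : {rmorphism F -> L})
  (n t alpha : nat) (lam : F) (zeta : L) (m : {poly F}) :
  (0 < n)%N ->
  coprime n #|F| ->
  t.-primitive_root lam ->
  (t * n)%N.-primitive_root zeta ->
  zeta ^+ n = iota lam ->
  (alpha < n)%N ->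
  (forall beta : nat, (beta < alpha)%N ->
     ~~ in_qcoset #|F| (t * n) (1 + t * alpha) (1 + t * beta)) ->
  map_poly iota m =
    \prod_(r in qcoset #|F| (t * n) (1 + t * alpha)) ('X - (zeta ^+ r)%:P) ->
  let k := #|qcoset #|F| (t * n) (1 + t * alpha)| in
  let C := irr_code n lam m in
  (N_rho lam (nonzero C) * (t * n) = (#|F| ^ k - 1) * gcdn (1 + t * alpha) n)%N
  /\ (num_weights C <= N_rho lam (nonzero C))%N
  /\ (num_weights C = N_rho lam (nonzero C) <->
      (forall c1 c2, c1 \in nonzero C -> c2 \in nonzero C ->
         wH c1 = wH c2 -> exists j : nat, iter j (rho lam) c1 = c2)).
Proof.
move=> n0 _ tprim zprim zn _ _ mdef k C.
split; first exact: (count_main _ _ _ _ _ _ _ _ _ n0 tprim zprim zn mdef).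
exact: (weights_main _ _ _ _ _ _ _ _ _ n0 tprim zprim zn mdef).
Qed.
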